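(* The size $\gamma$ of the smallest string attractor satisfies, for each edit type $\ast\in\{\mathrm{sub},\mathrm{ins},\mathrm{del}\}$: $\mathsf{MS}_{\ast}(\gamma,n)=O(\log n)$ and $\mathsf{AS}_{\ast}(\gamma,n)=O(\delta\log n)$; that is, there is a constant $c$ such that for every string $T$ of length $n$ and every string $T'$ with $\mathsf{ed}(T,T')=1$ (of the corresponding type), $\gamma(T')\le c\,\gamma(T)\log n$ and $\gamma(T')-\gamma(T)\le c\,\delta(T)\log n$.
   Context: Strings are over an alphabet $\Sigma$; $\mathsf{ed}$ is the edit distance (single-character substitutions, insertions, deletions). For a measure $C$: $\mathsf{MS}_{\mathrm{sub}}(C,n)=\max_{T\in\Sigma^n}\{C(T')/C(T): T'\in\Sigma^n,\ \mathsf{ed}(T,T')=1\}$, with $\mathsf{MS}_{\mathrm{ins}},\mathsf{MS}_{\mathrm{del}}$ analogous for $T'$ of length $n+1$, resp. $n-1$, and $\mathsf{AS}_\ast$ analogous with $C(T')-C(T)$. A string attractor of $T$ is a set $\Gamma$ of positions such that every substring of $T$ has an occurrence $T[i..j]$ containing a position of $\Gamma$; $\gamma(T)$ is the minimum size of a string attractor. $\delta(T)=\max_{1\le k\le |T|}\mathsf{Substr}(T,k)/k$, where $\mathsf{Substr}(T,k)$ is the number of distinct length-$k$ substrings of $T$; bounds stated in terms of $\delta$ use $\delta(T)$ of the original string $T$. *)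

(* Defs.v *)
From Stdlib Require Import Reals.
From mathcomp Require Import all_boot.
Set Implicit Arguments. Unset Strict Implicit. Unset Printing Implicit Defensive.

Section Strings.
Variable S : eqType.

Fixpoint ed (s : seq S) : seq S -> nat :=
  match s with
  | [::] => fun t => size t
  | a :: s' => fix ed_s (t : seq S) : nat :=
      match t with
      | [::] => size s
      | b :: t' => minn (minn (ed s' t).+1 (ed_s t').+1) (ed s' t' + (a != b))
      end
  end.

(* T[i .. i+k-1] (0-indexed, length k) *)
Definition substr (T : seq S) (i k : nat) : seq S := take k (drop i T).

Definition is_attractor (T : seq S) (G : {set 'I_(size T)}) : bool :=
  [forall i : 'I_(size T), forall k : 'I_(size T).+1,
     ((0 < k)%N && (i + k <= size T)%N) ==>
     [exists i' : 'I_(size T),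
        [&& (i' + k <= size T)%N, substr T i' k == substr T i k &
            [exists p in G, (i' <= p)%N && (p < i' + k)%N]]]].

(* gamma T = minimum size of a string attractor (the full set is always one). *)
Definition gamma (T : seq S) : nat :=
  \big[minn/size T]_(G : {set 'I_(size T)} | is_attractor G) #|G|.

Definition nSubstr (T : seq S) (k : nat) : nat :=
  size (undup [seq substr T i k | i <- iota 0 (size T - k).+1]).

Definition delta (T : seq S) : R :=
  foldr Rmax R0 [seq Rdiv (INR (nSubstr T k)) (INR k) | k <- iota 1 (size T)].

End Strings.

(* Main.v *)
Require Import Defs.
From Stdlib Require Import Reals Lra.
From mathcomp Require Import all_boot zify.
Delimit Scope R_scope with Re.
Set Implicit Arguments. Unset Strict Implicit. Unset Printing Implicit Defensive.


Section Edit.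
Variable S : eqType.

Lemma ed_consE (a b : S) s t :
  ed (a :: s) (b :: t) = minn (minn (ed s (b :: t)).+1 (ed (a :: s) t).+1) (ed s t + (a != b)).
Proof. by []. Qed.

Lemma ed0 (s t : seq S) : ed s t = 0 -> s = t.
Proof.
elim: s t => [|a s IH] [|b t] //.
  rewrite ed_consE => H.
  have H1 : ed s t + (a != b) = 0 by lia.
  move: H1; case: eqP => [-> |] //=; first by rewrite addn0 => /IH ->.
  by move=> _; lia.
Qed.

Lemma ed1 (s t : seq S) : ed s t = 1 ->
  exists x m m' y, [/\ s = x ++ m ++ y, t = x ++ m' ++ y, size m <= 1 & size m' <= 1].
Proof.
elim: s t => [|a s IH] [|b t] //.
- rewrite /=; case: t => // _. by exists [::], [::], [:: b], [::].
- rewrite /=; case: s {IH} => // _. by exists [::], [:: a], [::], [::].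
- rewrite ed_consE => H.
  have [H1|[H1|H1]] : ed s (b :: t) = 0 \/ ed (a :: s) t = 0 \/ ed s t + (a != b) = 1 by lia.
  + move/ed0: H1 => ->. by exists [::], [:: a], [::], (b :: t).
  + move/ed0: H1 => <-. by exists [::], [::], [:: b], (a :: s).
  + move: H1; case: eqP => [<- | /eqP nab].
    * rewrite addn0 => /IH [x [m [m' [y [-> -> h1 h2]]]]].
      by exists (a :: x), m, m', y.
    * rewrite addn1 => -[] /ed0 ->. by exists [::], [:: a], [:: b], t.
Qed.

Lemma substr_sub (U : seq S) s p L a k :
  substr U s L = substr U p L -> a + k <= L -> substr U (s + a) k = substr U (p + a) k.
Proof.
move=> E le.
have key : forall x, substr U (x + a) k = take k (drop a (substr U x L)).
  move=> x; rewrite /substr.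
  have -> : drop a (take L (drop x U)) = take (L - a) (drop a (drop x U)).
    by rewrite [RHS]take_drop subnK //; lia.
  rewrite take_takel ?drop_drop 1?addnC //; lia.
by rewrite !key E.
Qed.

Lemma substr_catl (x z : seq S) s k : 0 < k -> s + k <= size x -> substr (x ++ z) s k = substr x s k.
Proof.
move=> k0 h; rewrite /substr drop_cat ifT; last by lia.
by rewrite takel_cat // size_drop; lia.
Qed.

Lemma substr_catr (x z : seq S) s k : size x <= s -> substr (x ++ z) s k = substr z (s - size x) k.
Proof.
move=> h; rewrite /substr drop_cat ifF //; lia.
Qed.

End Edit.

Section Edit2.
Variable S : eqType.

Lemma nSubstr_edit (x m m' y : seq S) k :
  size m <= 1 -> size m' <= 1 -> 0 < k -> k <= size (x ++ m ++ y) -> k <= size (x ++ m' ++ y) ->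
  nSubstr (x ++ m' ++ y) k <= nSubstr (x ++ m ++ y) k + k.
Proof.
move=> hm hm' k0 kT kT'.
set T := x ++ m ++ y; set T' := x ++ m' ++ y.
rewrite /nSubstr.
set C := [seq substr T' i k | i <- iota (size x + 1 - k) k].
apply: (@leq_trans (size (undup [seq substr T i k | i <- iota 0 (size T - k).+1] ++ C))); last first.
  by rewrite size_cat size_map size_iota.
apply: uniq_leq_size; first exact: undup_uniq.
move=> u; rewrite mem_undup => /mapP [i]; rewrite mem_iota add0n => /andP [_ hi] ->.
have sT : size T = size x + size m + size y by rewrite /T !size_cat addnA.
have sT' : size T' = size x + size m' + size y by rewrite /T' !size_cat addnA.
move: kT kT'; rewrite !size_cat => kT kT'.
rewrite mem_cat; apply/orP.
case: (leqP (i + k) (size x)) => ha.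
  left; rewrite mem_undup; apply/mapP; exists i.
    rewrite mem_iota; lia.
  by rewrite /T /T' !substr_catl.
case: (leqP (size x + size m') i) => hb.
  left; rewrite mem_undup; apply/mapP; exists (i - size m' + size m).
    rewrite mem_iota; lia.
  have e1 := @substr_catr S x (m' ++ y) i k.
  have e2 := @substr_catr S m' y (i - size x) k.
  have e3 := @substr_catr S x (m ++ y) (i - size m' + size m) k.
  have e4 := @substr_catr S m y (i - size m' + size m - size x) k.
  rewrite /T /T' e1 ?e2 ?e3 ?e4; try lia.
  congr substr; lia.
right; apply/mapP; exists i => //; rewrite mem_iota; lia.
Qed.

End Edit2.

Lemma bigmin_le (I : finType) (P : pred I) (F : I -> nat) m i0 :
  P i0 -> \big[minn/m]_(i | P i) F i <= F i0.
Proof.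
rewrite unlock /reducebig.
have : i0 \in index_enum I by rewrite mem_index_enum.
elim: (index_enum I) => //= x r IH; rewrite inE => /orP [/eqP <- Pi|/IH h /h].
  by rewrite Pi geq_minl.
by case: (P x) => //; rewrite geq_min => ->; rewrite orbT.
Qed.

Section LZ.
Variable S : eqType.
Variable U : seq S.
Local Notation N := (size U).
Local Notation sub := (substr U).

Definition occ p l := has (fun s => sub s l == sub p l) (iota 0 p).
Definition ell p := \max_(l < (N - p).+1 | occ p l) l.

Lemma occP p l : reflect (exists2 s, s < p & sub s l = sub p l) (occ p l).
Proof.
apply: (iffP hasP) => [[s]|[s]]; rewrite ?mem_iota => h1 h2.
  by exists s; [lia | apply/eqP].
by exists s; [rewrite mem_iota; lia | apply/eqP].
Qed.

Lemma ell_le p : ell p <= N - p.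
Proof. by apply/bigmax_leqP => i _; rewrite -ltnS; exact: ltn_ord. Qed.

Lemma ell_max p l : l <= N - p -> occ p l -> l <= ell p.
Proof.
move=> h o.
have h' : l < (N - p).+1 by [].
exact: (@leq_bigmax_cond _ (fun i : 'I_(N - p).+1 => occ p i) (fun i => nat_of_ord i) (Ordinal h') o).
Qed.

Lemma ell_occ p : 0 < ell p -> occ p (ell p).
Proof.
pose K x := x = 0 \/ occ p x.
have : K (ell p).
  rewrite /ell; apply: (big_ind K); first by left.
    move=> x y hx hy; case: (leqP x y) => hxy.
      by [].  
    by [].
  by move=> i oi; right.
by case=> [->|].
Qed.

Fixpoint starts p f :=
  if f is f'.+1 then (if p < N then p :: starts (p + ell p).+1 f' else [::]) else [::].

Lemma starts_ge p f q : q \in starts p f -> p <= q < N.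
Proof.
elim: f p => //= f IH p; case: ifP => // pN; rewrite inE => /orP [/eqP -> | /IH]; lia.
Qed.

Lemma starts_sep p f q1 q2 : q1 \in starts p f -> q2 \in starts p f -> q1 < q2 ->
  (q1 + ell q1).+1 <= q2.
Proof.
elim: f p => //= f IH p; case: ifP => // pN; rewrite !inE.
move=> /orP [/eqP -> | h1] /orP [/eqP -> | h2] lt; first by lia.
- by move/starts_ge: h2; lia.
- by move/starts_ge: h1; lia.
- exact: IH h1 h2 lt.
Qed.

Lemma starts_uniq p f : uniq (starts p f).
Proof.
elim: f p => //= f IH p; case: ifP => // pN /=; rewrite IH andbT.
by apply/negP => /starts_ge; lia.
Qed.

Lemma starts_cover p f i : p <= i < N -> N - p <= f ->
  exists2 q, q \in starts p f & q <= i <= q + ell q.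
Proof.
elim: f p => [|f IH] p h hf; first by lia.
rewrite /= ifT; last by lia.
case: (leqP i (p + ell p)) => hi.
  by exists p; [rewrite inE eqxx | lia].
have [q qin hq] := IH (p + ell p).+1 (ltac:(lia)) (ltac:(lia)).
by exists q => //; rewrite inE qin orbT.
Qed.

Definition P0 q := q + ell q < N.
Definition ends := [seq q + ell q | q <- starts 0 N & P0 q].
Definition Gam : {set 'I_N} := [set i : 'I_N | nat_of_ord i \in ends].

Lemma Gam_att : is_attractor Gam.
Proof.
apply/forallP => i; apply/forallP => k; apply/implyP => /andP [k0 ik].
have exP : exists s, sub s k == sub i k by exists (nat_of_ord i).
case: (ex_minnP exP) => i0 /eqP E0 min0.
have i0i : i0 <= i := min0 i (eqxx _).
have i0N : i0 < N by lia.
have [q qin /andP [qi0 i0q]] := @starts_cover 0 N i0 (ltac:(lia)) (ltac:(lia)).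
case: (ltnP (q + ell q) (i0 + k)) => h.
  apply/existsP; exists (Ordinal i0N); rewrite /= E0 eqxx /=.
  apply/andP; split; first by lia.
  have qN : q + ell q < N by lia.
  apply/existsP; exists (Ordinal qN); rewrite inE /=.
  apply/andP; split; last by lia.
  by apply/mapP; exists q => //; rewrite mem_filter /P0 qN.
exfalso.
have ep : 0 < ell q by lia.
have /occP [s sq Es] := ell_occ ep.
have := substr_sub Es (a := i0 - q) (k := k) (ltac:(lia)).
rewrite subnKC // E0 => /eqP E.
have := min0 _ E; lia.
Qed.

Lemma card_Gam : #|Gam| <= size ends.
Proof.
rewrite cardE -(size_map (@nat_of_ord N)).
apply: uniq_leq_size.
  by rewrite (map_inj_uniq val_inj) enum_uniq.
move=> x /mapP [j]; rewrite mem_enum inE => jin ->; exact: jin.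
Qed.

Lemma gamma_ends : gamma U <= size ends.
Proof.
apply: leq_trans card_Gam; exact: bigmin_le Gam_att.
Qed.

End LZ.

Lemma gap_size (s : seq nat) g a c : 0 < g -> uniq s ->
  (forall x y, x \in s -> y \in s -> x < y -> x + g <= y) ->
  (forall x, x \in s -> a <= x < a + c * g) -> size s <= c.
Proof.
move=> g0 us sep rng.
rewrite -(size_map (fun x => (x - a) %/ g)) -[c](size_iota 0).
apply: uniq_leq_size.
  rewrite map_inj_in_uniq // => x y xs ys E.
  have key : forall x y, x \in s -> y \in s -> x < y -> (x - a) %/ g < (y - a) %/ g.
    move=> x1 y1 x1s y1s lt.
    have := sep _ _ x1s y1s lt; have := rng _ x1s; have := rng _ y1s => h1 h2 h3.
    have -> : y1 - a = (x1 - a + 1 * g) + (y1 - x1 - g) by lia.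
    apply: (@leq_trans ((x1 - a + 1 * g) %/ g)); last exact: leq_div2r (leq_addr _ _).
    by rewrite divnDMl // addn1.
  case: (ltngtP x y) => // lt.
    by move: (key _ _ xs ys lt); rewrite E ltnn.
  by move: (key _ _ ys xs lt); rewrite E ltnn.
move=> z /mapP [x xs ->]; rewrite mem_iota add0n ltn_divLR //.
by rewrite leq0n /=; have := rng _ xs; move: (c * g) => cg; lia.
Qed.

Lemma count_levels (s : seq nat) (P : pred nat) (f : nat -> nat) K :
  (forall q, q \in s -> P q -> f q < K) ->
  count P s <= \sum_(t < K) count (fun q => P q && (f q == t)) s.
Proof.
elim: s => [|x s IH] H; first by [].
rewrite /= big_split /=; apply: leq_add; last first.
  by apply: IH => q qs; apply: H; rewrite inE qs orbT.
case Px: (P x) => //=.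
have hx : f x < K by apply: H => //; rewrite inE eqxx.
rewrite (bigD1 (Ordinal hx)) //= eqxx; exact: leq_addr.
Qed.

Section Count.
Variable S : eqType.
Variable U : seq S.
Local Notation N := (size U).
Local Notation sub := (substr U).
Local Notation ell := (ell U).
Local Notation P0 := (P0 U).
Local Notation st := (starts U 0 N).

Lemma window_left q s k : P0 q -> s <= q -> (q + ell q).+1 <= s + k ->
  forall s', s' < s -> sub s' k != sub s k.
Proof.
move=> Pq sq qk s' lt; apply/eqP => E.
have := substr_sub E (a := q - s) (k := (ell q).+1) (ltac:(lia)).
rewrite subnKC // => E2.
have : occ U q (ell q).+1 by apply/occP; exists (s' + (q - s)) => //; lia.
have hl : (ell q).+1 <= N - q by move: Pq; rewrite /P0; lia.
move/(ell_max hl); lia.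
Qed.

Lemma leftmost_size (W : seq nat) k : uniq W ->
  (forall w, w \in W -> w + k <= N /\ forall s', s' < w -> sub s' k != sub w k) ->
  size W <= nSubstr U k.
Proof.
move=> uW H; rewrite /nSubstr -(size_map (fun w => sub w k)).
apply: uniq_leq_size.
  rewrite map_inj_in_uniq // => x y xs ys E.
  have [_ Hx] := H _ xs; have [_ Hy] := H _ ys.
  case: (ltngtP x y) => // lt.
    by move: (Hy _ lt); rewrite E eqxx.
  by move: (Hx _ lt); rewrite E eqxx.
move=> z /mapP [w ws ->]; rewrite mem_undup; apply/mapP; exists w => //.
by have [h _] := H _ ws; rewrite mem_iota; lia.
Qed.

Definition lvl q := trunc_log 2 (ell q).+1.
Definition Lt t := [seq q <- st | P0 q && (lvl q == t)].
Definition intr t q := (2 ^ t <= q) && (q + 4 * 2 ^ t <= N).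
Definition It t := [seq q <- Lt t | intr t q].

Lemma Lt_prop t q : q \in Lt t -> [/\ q \in st, P0 q, 2 ^ t <= (ell q).+1 & (ell q).+1 < 2 ^ t.+1].
Proof.
rewrite mem_filter => /andP [/andP [Pq /eqP lq] qin]; split => //;
  have := @trunc_log_bounds 2 (ell q).+1 (erefl _) (erefl _); rewrite /= -/(lvl q) lq;
  by case/andP.
Qed.

Lemma Lt_sep t x y : x \in Lt t -> y \in Lt t -> x < y -> x + 2 ^ t <= y.
Proof.
move=> /Lt_prop [xs _ h1 _] /Lt_prop [ys _ _ _] lt.
have := starts_sep xs ys lt; lia.
Qed.

Lemma Lt_uniq t : uniq (Lt t).
Proof. exact/filter_uniq/starts_uniq. Qed.

Lemma sub_gap (s : seq nat) (A : pred nat) g a c t : 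
  {subset s <= Lt t} -> uniq s -> g = 2 ^ t ->
  (forall x, x \in s -> A x -> a <= x < a + c * g) -> count A s <= c.
Proof.
move=> sub us -> rng; rewrite -size_filter.
apply: (gap_size (g := 2 ^ t) (a := a)).
- by rewrite expn_gt0.
- exact: filter_uniq.
- move=> x y; rewrite !mem_filter => /andP [_ xs] /andP [_ ys]; apply: Lt_sep; exact: sub.
- by move=> x; rewrite mem_filter => /andP [Ax xs]; apply: rng.
Qed.

Lemma Lt_size t : size (Lt t) <= size (It t) + 5.
Proof.
rewrite -(count_predC (intr t)) size_filter leq_add2l.
apply: (@leq_trans (count (fun q => q < 2 ^ t) (Lt t) + count (fun q => N < q + 4 * 2 ^ t) (Lt t))).
  rewrite -count_predUI; apply: leq_trans (leq_addr _ _).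
  by apply: sub_count => q; rewrite /= /intr negb_and -!ltnNge.
have g0 : 0 < 2 ^ t by rewrite expn_gt0.
apply: (@leq_add _ _ 1 4).
  apply: (@sub_gap _ _ (2 ^ t) 0 1 t) => //; first exact: Lt_uniq.
  by move=> x _ h; lia.
apply: (@sub_gap _ _ (2 ^ t) (N - 4 * 2 ^ t) 4 t) => //; first exact: Lt_uniq.
move=> x /Lt_prop [xs _ _ _] h.
have := starts_ge xs; lia.
Qed.

Lemma It_windows t : size (It t) * 2 ^ t <= nSubstr U (4 * 2 ^ t).
Proof.
rewrite -[X in _ * X <= _](size_iota 0 (2 ^ t)) -(size_allpairs (fun q o => q - o)).
apply: leftmost_size.
  apply: allpairs_uniq; [exact/filter_uniq/Lt_uniq | exact: iota_uniq |].
  move=> [q1 o1] [q2 o2] /allpairsP [[a1 b1] [/= a1I b1I [-> ->]]].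
  move=> /allpairsP [[a2 b2] [/= a2I b2I [-> ->]]] /= E.
  move: b1I b2I; rewrite !mem_iota => hb1 hb2.
  move: a1I; rewrite mem_filter /intr => /andP [/andP [h1 _] a1L].
  move: a2I; rewrite mem_filter /intr => /andP [/andP [h2 _] a2L].
  case: (ltngtP a1 a2) => lt.
  - have := Lt_sep a1L a2L lt; lia.
  - have := Lt_sep a2L a1L lt; lia.
  - subst; congr pair; lia.
move=> w /allpairsP [[q o] [/= qI oI ->]].
move: oI; rewrite mem_iota => ho.
move: qI; rewrite mem_filter /intr => /andP [/andP [h1 h2] qL].
have [_ Pq l1 l2] := Lt_prop qL.
split; first by lia.
apply: (window_left Pq); first by lia.
rewrite expnS in l2; lia.
Qed.

Lemma It_N t : 0 < size (It t) -> 4 * 2 ^ t <= N.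
Proof.
case E: (It t) => [|q r] //= _.
have : q \in It t by rewrite E inE eqxx.
rewrite mem_filter /intr => /andP [/andP [_ h] _]; lia.
Qed.

Lemma gamma_levels :
  gamma U <= \sum_(t < (trunc_log 2 N).+1) (size (It t) + 5).
Proof.
apply: (leq_trans (gamma_ends U)).
rewrite /ends size_map size_filter.
apply: (leq_trans (count_levels (f := lvl) (K := (trunc_log 2 N).+1) _)).
  move=> q _ Pq; rewrite ltnS /lvl; apply: leq_trunc_log; rewrite /P0 in Pq; lia.
apply: leq_sum => t _; rewrite -size_filter; exact: Lt_size.
Qed.

End Count.

Lemma INRD m n : INR (m + n) = (INR m + INR n)%Re.
Proof. exact: plus_INR. Qed.
Lemma INRM m n : INR (m * n) = (INR m * INR n)%Re.
Proof. exact: mult_INR. Qed.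
Lemma INR_leq m n : m <= n -> (INR m <= INR n)%Re.
Proof. by move/leP; apply: le_INR. Qed.
Lemma INR_gt0 n : 0 < n -> (0 < INR n)%Re.
Proof. by move/ltP; apply: lt_0_INR. Qed.
Lemma INR_ge0 n : (0 <= INR n)%Re.
Proof. exact: pos_INR. Qed.

Lemma sum_INR_leq K (x : nat -> nat) B :
  (forall t, t < K -> (INR (x t) <= B)%Re) -> (INR (\sum_(t < K) x t) <= INR K * B)%Re.
Proof.
elim: K => [|K IH] H.
  rewrite big_ord0 /=; lra.
rewrite big_ord_recr INRD S_INR /=.
have h1 := IH (fun t lt => H t (ltnW lt)).
have h2 := H K (ltnSn K).
rewrite Rmult_plus_distr_r Rmult_1_l; exact: Rplus_le_compat h1 h2.
Qed.

Section Real.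
Variable S : eqType.

Lemma gamma_real (U : seq S) (D : R) : (0 <= D)%Re ->
  (forall k, 0 < k -> k <= size U -> (INR (nSubstr U k) <= D * INR k)%Re) ->
  (INR (gamma U) <= INR (trunc_log 2 (size U)).+1 * (4 * D + 5))%Re.
Proof.
move=> D0 HD.
apply: Rle_trans (INR_leq (gamma_levels U)) _.
apply: (@sum_INR_leq _ (fun t => size (It U t) + 5)) => t _.
rewrite INRD.
have -> : INR 5 = 5%Re by simpl; lra.
suff : (INR (size (It U t)) <= 4 * D)%Re by lra.
case: (posnP (size (It U t))) => [-> | pos].
  simpl; lra.
have hN := It_N pos.
have hW := INR_leq (It_windows U t).
have hk := HD (4 * 2 ^ t) (ltac:(rewrite muln_gt0 expn_gt0; lia)) hN.
rewrite INRM in hW; rewrite INRM in hk.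
have g0 : (0 < INR (2 ^ t))%Re by apply: INR_gt0; rewrite expn_gt0.
have h : (INR (size (It U t)) * INR (2 ^ t) <= (4 * D) * INR (2 ^ t))%Re.
  have e4 : INR 4 = 4%Re by simpl; lra.
  rewrite e4 in hk. nra.
exact: Rmult_le_reg_r g0 h.
Qed.

Lemma nSubstr_le (U : seq S) k : nSubstr U k <= (size U - k).+1.
Proof.
rewrite /nSubstr; apply: leq_trans (size_undup _) _; by rewrite size_map size_iota.
Qed.

Lemma nSubstr_gt0 (U : seq S) k : 0 < nSubstr U k.
Proof.
rewrite /nSubstr lt0n size_eq0; apply/negP => /eqP /undup_nil.
by [].
Qed.

Lemma nSubstr_att (T : seq S) (G : {set 'I_(size T)}) k : is_attractor G -> 0 < k -> k <= size T ->
  nSubstr T k <= k * #|G|.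
Proof.
move=> att k0 kT.
rewrite mulnC /nSubstr cardE -[X in _ <= _ * X](size_iota 0 k) -(size_allpairs (fun (p : 'I_(size T)) o => substr T (p - o) k)).
apply: uniq_leq_size; first exact: undup_uniq.
move=> u; rewrite mem_undup => /mapP [i]; rewrite mem_iota add0n => /andP [_ hi] ->.
have hi' : i < size T by lia.
have hk' : k < (size T).+1 by lia.
move/forallP: att => /(_ (Ordinal hi')) /forallP /(_ (Ordinal hk')) /implyP.
case/(_ _)/Wrap; first by rewrite /= k0 /=; lia.
move=> /existsP [i' /and3P [_ /eqP E /existsP [p /andP [pG /andP [h1 h2]]]]].
move: h1 h2 E => /= h1 h2 E.
apply/allpairsP; exists (p, nat_of_ord p - i') => /=; split.
- by rewrite mem_enum.
- by rewrite mem_iota; lia.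
- by rewrite -E; congr substr; lia.
Qed.

End Real.
Unset Implicit Arguments.

Lemma foldr_Rmax_ge (f : nat -> R) (l : seq nat) k : k \in l -> (f k <= foldr Rmax 0 (map f l))%Re.
Proof.
elim: l => //= a l IH; rewrite inE => /orP [/eqP -> | /IH h].
  exact: Rmax_l.
exact: Rle_trans h (Rmax_r _ _).
Qed.

Lemma foldr_Rmax_le (f : nat -> R) (l : seq nat) B : (0 <= B)%Re ->
  (forall k, k \in l -> (f k <= B)%Re) -> (foldr Rmax 0 (map f l) <= B)%Re.
Proof.
move=> B0; elim: l => //= a l IH H.
apply: Rmax_lub; first by apply: H; rewrite inE eqxx.
by apply: IH => k kl; apply: H; rewrite inE kl orbT.
Qed.

Lemma ln_le' a b : (0 < a)%Re -> (a <= b)%Re -> (ln a <= ln b)%Re.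
Proof.
move=> a0 ab; case: (Rle_lt_or_eq_dec _ _ ab) => h.
  by apply: Rlt_le; apply: ln_increasing.
by rewrite h; apply: Rle_refl.
Qed.

Lemma nSubstr_gamma {S : eqType} (T : seq S) k : 0 < k -> k <= size T -> nSubstr T k <= k * gamma T.
Proof.
move=> k0 kT; rewrite /gamma.
pose K x := nSubstr T k <= k * x.
apply: (big_ind K).
- rewrite /K; apply: leq_trans (nSubstr_le _ _) _; rewrite -[X in X <= _]mul1n; apply: leq_mul; lia.
- move=> a b; rewrite /K => ha hb; case: (leqP a b) => h.
    by [].
  by [].
- by move=> G att; rewrite /K; apply: nSubstr_att.
Qed.

Lemma INR_exp2 t : INR (2 ^ t) = (2 ^ t)%Re.
Proof.
elim: t => [|t IH]; first by simpl; lra.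
rewrite expnS INRM IH /=; lra.
Qed.

Open Scope R_scope.

Theorem mainTheorem4 :
  exists c : R,
    forall (S : eqType) (T T' : seq S),
      (2 <= size T)%N ->
      ed T T' = 1%N ->
      INR (gamma T') <= c * INR (gamma T) * ln (INR (size T)) /\
      INR (gamma T') - INR (gamma T) <= c * delta T * ln (INR (size T)).
Proof.
exists 78 => S T T' n2 e1.
have [x [m [m' [y [ET ET' hm hm']]]]] := ed1 e1.
have sT : size T = (size x + size m + size y)%N by rewrite ET !size_cat addnA.
have sT' : size T' = (size x + size m' + size y)%N by rewrite ET' !size_cat addnA.
have N0 : (0 < size T')%N by lia.
have NN : (size T' <= (size T).+1)%N by lia.
set d := delta T.
have Hd1 : forall k, (0 < k)%N -> (k <= size T)%N -> INR (nSubstr T k) <= d * INR k.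
  move=> k k0 kT.
  have h : INR (nSubstr T k) / INR k <= d.
    apply: (foldr_Rmax_ge (fun k => INR (nSubstr T k) / INR k)).
    by rewrite mem_iota; lia.
  have kp := INR_gt0 k0.
  have e : INR (nSubstr T k) = INR (nSubstr T k) / INR k * INR k by field; lra.
  rewrite e; apply: Rmult_le_compat_r => //; lra.
have Hdg : d <= INR (gamma T).
  apply: foldr_Rmax_le; first exact: INR_ge0.
  move=> k; rewrite mem_iota => /andP [k1 k2].
  have k0 : (0 < k)%N by lia.
  have kp := INR_gt0 k0.
  have h := INR_leq (@nSubstr_gamma _ T k k0 (ltac:(lia))).
  rewrite INRM in h.
  apply: (Rmult_le_reg_r _ _ _ kp).
  have e : INR (nSubstr T k) / INR k * INR k = INR (nSubstr T k) by field; lra.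
  rewrite e; lra.
have Hd0 : 1 <= d.
  have := Hd1 1%N erefl (ltac:(lia)).
  have := INR_leq (nSubstr_gt0 T 1); rewrite /=; lra.
have HD : forall k, (0 < k)%N -> (k <= size T')%N -> INR (nSubstr T' k) <= (d + 1) * INR k.
  move=> k k0 kN.
  have kp := INR_gt0 k0.
  case: (leqP k (size T)) => kT.
    have h : (nSubstr T' k <= nSubstr T k + k)%N.
      rewrite ET ET'; apply: nSubstr_edit => //; [rewrite -ET | rewrite -ET'] => //.
    have := INR_leq h; rewrite INRD; have := Hd1 k k0 kT; lra.
  have h : (nSubstr T' k <= k)%N by apply: leq_trans (nSubstr_le _ _) _; lia.
  have := INR_leq h; nra.
have Hg := gamma_real (D := d + 1) (ltac:(lra)) HD.
set t := trunc_log 2 (size T').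
have HK : INR t.+1 <= 6 * ln (INR (size T)).
  have p1 : (2 ^ t <= size T')%N by apply: trunc_logP.
  have p2 : INR (2 ^ t) = 2 ^ t by exact: INR_exp2.
  have n2r : 2 <= INR (size T) by have := INR_leq n2; simpl; lra.
  have l1 : ln (2 ^ t) <= ln (2 * INR (size T)).
    apply: ln_le'; first by apply: pow_lt; lra.
    rewrite -p2; apply: Rle_trans (INR_leq p1) _.
    have := INR_leq NN; rewrite S_INR; lra.
  rewrite ln_pow in l1; last lra.
  rewrite ln_mult in l1; try lra.
  have l2 : ln 2 <= ln (INR (size T)) by apply: ln_le'; lra.
  have := ln_lt_2; rewrite S_INR => l3.
  have := pos_INR t => l4.
  nra.
have hln : 0 <= ln (INR (size T)).
  have n2r : 2 <= INR (size T) by have := INR_leq n2; simpl; lra.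
  rewrite -ln_1; apply: ln_le'; lra.
have hK0 := pos_INR t.+1.
have main : INR (gamma T') <= 78 * d * ln (INR (size T)).
  apply: Rle_trans Hg _.
  have h1 : 4 * (d + 1) + 5 <= 13 * d by lra.
  apply: Rle_trans (Rmult_le_compat_l _ _ _ hK0 h1) _.
  nra.
have hg0 := pos_INR (gamma T').
have hg1 := pos_INR (gamma T).
split.
  apply: Rle_trans main _.
  apply: Rmult_le_compat_r => //; lra.
lra.
Qed.
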